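(* Let $m$ and $n$ be positive integers. Then $$\binom{m+n-2}{m-1}\binom{n}{m}\binom{2n}{n}\equiv 0\pmod{m+n}.$$
   Context: Binomial coefficients $\binom{a}{b}$ are zero when $b<0$ or $b>a$ (for nonnegative integer $a$). *)

(* Defs.v *)
From mathcomp Require Import all_boot.

(* Main.v *)
Require Import Defs.
From mathcomp Require Import all_boot.
From mathcomp Require Import all_algebra ring zify.

Lemma revision (m n : nat) : m <= n ->
  'C(n.*2, n) * 'C(n, m) = 'C(n.*2, n - m) * 'C(n + m, m).
Proof.
move=> le_mn.
have K0 : 0 < n`! * (m`! * (n - m)`!) by rewrite !muln_gt0 !fact_gt0.
apply/eqP; rewrite -(eqn_pmul2r K0); apply/eqP.
have H1 := bin_fact (leq_addr n n).
have H2 := bin_fact le_mn.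
have H3 := bin_fact (leq_addl n m).
have H4 : n - m <= n + n by rewrite (leq_trans (leq_subr m n)) ?leq_addr.
have H5 := bin_fact H4.
rewrite -addnn.
rewrite addnK in H1.
have E : n + n - (n - m) = n + m by rewrite subnBA // addnC addnA addnK addnC.
rewrite E in H5. rewrite addnK in H3.
transitivity ('C(n + n, n) * (n`! * n`!)).
  by rewrite -{3}H2; ring.
rewrite H1 -H5 -H3; ring.
Qed.

Theorem theorem2 (m n : nat) (hm : 0 < m) (hn : 0 < n) :
  (m + n) %| 'C(m + n - 2, m - 1) * 'C(n, m) * 'C(n.*2, n).
Proof.
case: (leqP m n) => [le_mn | lt_nm]; last by rewrite (bin_small lt_nm) muln0 mul0n dvdn0.
have -> : 'C(m + n - 2, m - 1) * 'C(n, m) * 'C(n.*2, n) =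
   'C(n.*2, n - m) * ('C(m + n - 2, m - 1) * 'C(n + m, m)).
  by rewrite -mulnA [_ * 'C(n.*2, n)]mulnC revision //; ring.
apply: dvdn_mull.
have cop : coprime (m + n) (m + n - 1).
  have : 0 < m + n by rewrite addn_gt0 hm.
  case: (m + n) => [|k] //= _.
  by rewrite subn1 /= coprimeSn.
rewrite -(Gauss_dvdr _ cop).
have A : (m + n - 1) * 'C(m + n - 2, m - 1) = n * 'C(m + n - 1, m - 1).
  have := mul_bin_down (m + n - 1) (m - 1).
  have -> : (m + n - 1).-1 = m + n - 2 by rewrite -subn1 -subnDA.
  by move=> ->; congr (_ * _); lia.
have B : n * 'C(n + m, m) = (m + n) * 'C(m + n - 1, m).
  have := mul_bin_down (m + n) m.
  by rewrite -subn1 addKn => ->; rewrite addnC.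
rewrite mulnA A -mulnA mulnCA B mulnCA.
exact: dvdn_mulr.
Qed.
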